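(* Let $n$ and $m$ be integers with $n\geq 5$ and $m\geq 5$. For each $G\in T_{n,m}\setminus T_{n,m}^*$ there exists $H\in T_{n,m}^*$ that is $3$-stronger than $G$.
   Context: All graphs are finite, simple and undirected. A two-terminal graph is a graph $G$ together with two distinguished vertices $s,t$ (the terminals). $T_{n,m}$ denotes the set of all pairwise nonisomorphic (with isomorphisms preserving the set of terminals) two-terminal graphs with $n$ vertices and $m$ edges. Two vertices $u,v$ are true twins if $N[u]=N[v]$ (closed neighborhoods). For a positive integer $d$, a $d$-pathset of a two-terminal graph $G$ is a spanning subgraph of $G$ containing a path of length (number of edges) at most $d$ joining $s$ and $t$; $N_i^d(G)$ is the number of $d$-pathsets of $G$ with exactly $i$ edges. An edge $e$ of $G$ is $d$-irrelevant if for every $d$-pathset $H$ of $G$ containing $e$, $H-e$ is also a $d$-pathset. $T_{n,m}^*$ is the set of graphs in $T_{n,m}$ with no $3$-irrelevant edges whose terminals are true twins. For $G,H\in T_{n,m}$, $H$ is $d$-stronger than $G$ if $N_i^d(H)\geq N_i^d(G)$ for every $i\in\{1,\ldots,m\}$ and $N_j^d(H)>N_j^d(G)$ for some $j\in\{1,\ldots,m\}$. *)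

(* Defs.v *)
From mathcomp Require Import all_boot.
Set Implicit Arguments. Unset Strict Implicit. Unset Printing Implicit Defensive.

Definition simple_edges (n : nat) (E : {set {set 'I_n}}) : bool :=
  [forall e in E, #|e| == 2].

Definition two_terminal (n : nat) (E : {set {set 'I_n}}) (s t : 'I_n) : bool :=
  simple_edges E && (s != t).

Definition has_st_path (n : nat) (d : nat) (F : {set {set 'I_n}}) (s t : 'I_n)
  : bool :=
  [exists k : 'I_d.+1, exists p : k.-tuple 'I_n,
    [&& path (fun x y => [set x; y] \in F) s p,
        last s p == t &
        uniq (s :: p)]].

Definition is_pathset (n d : nat) (E : {set {set 'I_n}}) (s t : 'I_n)
  (F : {set {set 'I_n}}) : Prop :=
  F \subset E /\ has_st_path d F s t.

Definition Ncount (n d : nat) (E : {set {set 'I_n}}) (s t : 'I_n) (i : nat)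
  : nat :=
  #|[set F : {set {set 'I_n}} |
      (F \subset E) && (#|F| == i) && has_st_path d F s t]|.

Definition irrelevant (n d : nat) (E : {set {set 'I_n}}) (s t : 'I_n)
  (e : {set 'I_n}) : Prop :=
  e \in E /\
  forall H : {set {set 'I_n}},
    is_pathset d E s t H -> e \in H -> is_pathset d E s t (H :\ e).

Definition closed_nbhd (n : nat) (E : {set {set 'I_n}}) (v : 'I_n)
  : {set 'I_n} :=
  v |: [set u | [set u; v] \in E].

Definition true_twins (n : nat) (E : {set {set 'I_n}}) (u v : 'I_n) : Prop :=
  closed_nbhd E u = closed_nbhd E v.

(* Membership in T^*_{n,m} (given that G is in T_{n,m}): no 3-irrelevant
   edges and the terminals are true twins. *)
Definition in_Tstar (n : nat) (E : {set {set 'I_n}}) (s t : 'I_n) : Prop :=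
  (forall e, ~ irrelevant 3 E s t e) /\ true_twins E s t.

Definition stronger (n d m : nat)
  (EH : {set {set 'I_n}}) (sH tH : 'I_n)
  (EG : {set {set 'I_n}}) (sG tG : 'I_n) : Prop :=
  (forall i, 1 <= i <= m -> Ncount d EG sG tG i <= Ncount d EH sH tH i) /\
  (exists j, 1 <= j <= m /\ Ncount d EG sG tG j < Ncount d EH sH tH j).

(* Main.v *)
Require Import Defs.
From mathcomp Require Import all_boot.
From Stdlib Require Import Classical_Prop.
From mathcomp Require Import zify.
Set Implicit Arguments. Unset Strict Implicit. Unset Printing Implicit Defensive.

Ltac econtra := match goal with
 | H : is_true (?x != ?x) |- _ => by move: (H); rewrite eqxx
 | H : is_true (~~ (?x == ?x)) |- _ => by move: (H); rewrite eqxx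
 | H : is_true (?x == ?y), H' : is_true (?x != ?y) |- _ => by move: (H'); rewrite (eqP H) eqxx
 | H : ?x = ?y, H' : is_true (?x != ?y) |- _ => by move: (H'); rewrite H eqxx
 | H : ?x = ?y, H' : is_true (?y != ?x) |- _ => by move: (H'); rewrite H eqxx
 | H : is_true (?x == ?y), H' : is_true (?y != ?x) |- _ => by move: (H'); rewrite (eqP H) eqxx
 end.

Section S0.
Variable n : nat.
Lemma edge_eq0 (x y u v : 'I_n) : [set x; y] = [set u; v] -> (x = u /\ y = v) \/ (x = v /\ y = u).
Proof.
move=> H.
have hx : x \in [set u; v] by rewrite -H set21.
have hy : y \in [set u; v] by rewrite -H set22.
have hu : u \in [set x; y] by rewrite H set21.
have hv : v \in [set x; y] by rewrite H set22.
move: hx hy hu hv; rewrite !inE.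
case/orP=> /eqP hx; case/orP=> /eqP hy; case/orP=> /eqP hu; case/orP=> /eqP hv;
  subst; auto.
Qed.
End S0.

Ltac edcase_old := repeat match goal with
 | H : is_true ([set _; _] == [set _; _]) |- _ => move/eqP/edge_eq0: H => [[? ?]|[? ?]]
 end; subst.

Ltac disj := repeat match goal with
 | H : is_true (_ || _) |- _ => case/orP: H => H
 | H : is_true (_ && _) |- _ => let H' := fresh H in case/andP: H => H H'
 end.

Ltac eqs := repeat match goal with
 | H : is_true ([set _; _] == [set _; _]) |- _ => move/eqP/edge_eq0: H => [[? ?]|[? ?]]
 | H : is_true (?x == ?y) |- _ => is_var x; move/eqP: H => H; subst x
 | H : is_true (?x == ?y) |- _ => is_var y; move/eqP: H => H; subst y
 end; subst.

Ltac crush := disj; eqs; try econtra.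
Ltac notin := rewrite !inE; apply/negP => ?; crush.

Section S.
Variable n : nat.
Variables s t : 'I_n.
Hypothesis Hst : s != t.
Implicit Types (x y u v a b c : 'I_n) (F E Q : {set {set 'I_n}}) (g : {set 'I_n}).

Definition shape Q :=
  Q = [set [set s; t]] \/
  (exists a, [/\ a != s, a != t & Q = [set [set s; a]; [set a; t]]]) \/
  (exists a b, [&& a != s, a != t, b != s, b != t & a != b] /\
      Q = [set [set s; a]; [set a; b]; [set b; t]]).

Definition P F := has_st_path 3 F s t.

Lemma P_shape F : P F <-> exists Q, shape Q /\ Q \subset F.
Proof.
split.
- case/existsP=> k /existsP [[l szl]] /= /and3P [Hp Hl Hu].
  case: k szl => [[|[|[|[|k]]]] lt] //= /eqP szl.
  + by case: l szl Hp Hl Hu => //= _ _; rewrite (negbTE Hst).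
  + case: l szl Hp Hl Hu => [|v [|]] //= _; rewrite andbT => Hv /eqP vt _.
    subst v; exists [set [set s; t]]; split; first by left.
    by rewrite sub1set.
  + case: l szl Hp Hl Hu => [|a [|v [|]]] //= _; rewrite andbT => /andP [Ha Hv] /eqP vt.
    subst v; rewrite !inE !negb_or andbT => /andP [/andP [sa st'] at'].
    exists [set [set s; a]; [set a; t]]; split.
      by right; left; exists a; split; rewrite // eq_sym.
    by apply/subsetP=> g; rewrite !inE => /orP [] /eqP ->.
  + case: l szl Hp Hl Hu => [|a [|b [|v [|]]]] //= _; rewrite andbT => /and3P [Ha Hb Hv] /eqP vt.
    subst v; rewrite !inE !negb_or andbT => /and3P [/and3P [sa sb st'] /andP [ab at'] bt].
    exists [set [set s; a]; [set a; b]; [set b; t]]; split.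
      by right; right; exists a, b; split; rewrite // ![_ == s]eq_sym sa sb /= at' bt.
    by apply/subsetP=> g; rewrite !inE => /orP [/orP []|] /eqP ->.
- case=> Q [[->|[[a [sa ta ->]]|[a [b [/and5P [sa ta sb tb ab] ->]]]]]] /subsetP sub.
  + apply/existsP; exists (Ordinal (isT : 1 < 4)); apply/existsP.
    exists [tuple t] => /=; rewrite eqxx andbT inE Hst andbT.
    by rewrite andbT; apply: sub; rewrite inE.
  + apply/existsP; exists (Ordinal (isT : 2 < 4)); apply/existsP.
    exists [tuple a; t] => /=; rewrite eqxx andbT.
    rewrite !inE !negb_or eq_sym sa Hst ta andbT /=.
    by rewrite !sub // !inE eqxx ?orbT.
  + apply/existsP; exists (Ordinal (isT : 3 < 4)); apply/existsP.
    exists [tuple a; b; t] => /=; rewrite eqxx andbT.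
    rewrite !inE !negb_or eq_sym sa Hst ta tb ab andbT /=.
    rewrite eq_sym sb /=.
    by rewrite !sub // !inE eqxx ?orbT.
Qed.


Lemma edge_eq x y u v : [set x; y] = [set u; v] -> (x = u /\ y = v) \/ (x = v /\ y = u).
Proof.
move=> H.
have hx : x \in [set u; v] by rewrite -H set21.
have hy : y \in [set u; v] by rewrite -H set22.
have hu : u \in [set x; y] by rewrite H set21.
have hv : v \in [set x; y] by rewrite H set22.
move: hx hy hu hv; rewrite !inE.
case/orP=> /eqP hx; case/orP=> /eqP hy; case/orP=> /eqP hu; case/orP=> /eqP hv;
  subst; auto.
Qed.

Lemma P_mono F F' : F \subset F' -> P F -> P F'.
Proof.
move=> sub /P_shape [Q [sQ QF]]; apply/P_shape; exists Q; split => //.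
exact: subset_trans QF sub.
Qed.

Lemma shape_s Q : shape Q -> exists2 g, g \in Q & s \in g.
Proof.
case=> [->|[[a [_ _ ->]]|[a [b [_ ->]]]]].
- by exists [set s; t]; rewrite !inE ?eqxx.
- by exists [set s; a]; rewrite !inE ?eqxx.
- by exists [set s; a]; rewrite !inE ?eqxx.
Qed.

Lemma shape_t Q : shape Q -> exists2 g, g \in Q & t \in g.
Proof.
case=> [->|[[a [_ _ ->]]|[a [b [_ ->]]]]].
- by exists [set s; t]; rewrite !inE ?eqxx ?orbT.
- by exists [set a; t]; rewrite !inE ?eqxx ?orbT.
- by exists [set b; t]; rewrite !inE ?eqxx ?orbT.
Qed.

Lemma NS F : (forall g, g \in F -> s \notin g) -> ~ P F.
Proof.
move=> H /P_shape [Q [sQ /subsetP QF]]; case: (shape_s sQ) => g gQ sg.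
by move: (H g (QF g gQ)); rewrite sg.
Qed.

Lemma NT F : (forall g, g \in F -> t \notin g) -> ~ P F.
Proof.
move=> H /P_shape [Q [sQ /subsetP QF]]; case: (shape_t sQ) => g gQ sg.
by move: (H g (QF g gQ)); rewrite sg.
Qed.


Lemma L2 a b : a != s -> a != t -> b != s -> b != t -> a != b ->
  ~ P [set [set s; a]; [set b; t]].
Proof.
move=> sa ta sb tb ab /P_shape [Q [sQ QF]].
case: sQ QF => [->|[[a' [sa' ta' ->]]|[a' [b' [/and5P [sa' ta' sb' tb' ab'] ->]]]]];
 rewrite ?subUset !sub1set !inE => QF; crush.
Qed.

Lemma shape_minus Q f : shape Q -> f \in Q -> ~ P (Q :\ f).
Proof.
move=> sQ fQ PQf.
case: sQ fQ PQf => [->|[[a [sa ta ->]]|[a [b [/and5P [sa ta sb tb ab] ->]]]]];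
 rewrite !inE => fQ PQf; crush.
- by apply: (@NS _ _ PQf) => g; rewrite !inE => H; crush.
- by apply: (@NS _ _ PQf) => g; rewrite !inE => H; crush; notin.
- by apply: (@NT _ _ PQf) => g; rewrite !inE => H; crush; notin.
- by apply: (@NS _ _ PQf) => g; rewrite !inE => H; crush; notin.
- apply: (L2 sa ta sb tb ab); apply: P_mono PQf.
  by apply/subsetP => g; rewrite !inE => H; crush; rewrite eqxx ?orbT.
- by apply: (@NT _ _ PQf) => g; rewrite !inE => H; crush; notin.
Qed.

Definition useless E e := forall Q, shape Q -> Q \subset E -> e \notin Q.

Lemma useless_rm E e F : useless E e -> F \subset E -> P F -> P (F :\ e).
Proof.
move=> ue FE /P_shape [Q [sQ QF]]; apply/P_shape; exists Q; split => //.
have eQ := ue Q sQ (subset_trans QF FE).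
apply/subsetP => g gQ; rewrite !inE (subsetP QF _ gQ) andbT.
by apply: contraNneq eQ => <-.
Qed.

Lemma irr_useless E e : irrelevant 3 E s t e -> useless E e.
Proof.
case=> eE H Q sQ QE; apply/negP => eQ.
have PQ : P Q by apply/P_shape; exists Q; split.
by case: (H Q (conj QE PQ) eQ) => _; apply: shape_minus.
Qed.

Lemma shape_int Q x y : shape Q -> [set x; y] \in Q ->
  x != s -> x != t -> y != s -> y != t ->
  ([set s; x] \in Q /\ [set y; t] \in Q) \/ ([set s; y] \in Q /\ [set x; t] \in Q).
Proof.
move=> sQ + xs xt ys yt.
case: sQ => [->|[[a [sa ta ->]]|[a [b [/and5P [sa ta sb tb ab] ->]]]]];
 rewrite !inE => H; crush.
- by left; rewrite !eqxx ?orbT.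
- by right; rewrite !eqxx ?orbT.
Qed.

Definition Aset E i := [set F : {set {set 'I_n}} | (F \subset E) && (#|F| == i) && P F].

Lemma NcountE E i : Ncount 3 E s t i = #|Aset E i|.
Proof. by []. Qed.

Lemma inj_le E E' (Psi : {set {set 'I_n}} -> {set {set 'I_n}}) :
  (forall F, F \subset E -> P F -> [/\ Psi F \subset E', #|Psi F| = #|F| & P (Psi F)]) ->
  (forall F1 F2, F1 \subset E -> P F1 -> F2 \subset E -> P F2 -> Psi F1 = Psi F2 -> F1 = F2) ->
  forall i, Ncount 3 E s t i <= Ncount 3 E' s t i.
Proof.
move=> H1 H2 i; rewrite !NcountE.
have -> : #|Aset E i| = #|Psi @: Aset E i|.
  apply/esym/card_in_imset => F1 F2; rewrite !inE => /andP [/andP [s1 _] p1] /andP [/andP [s2 _] p2].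
  exact: H2.
apply: subset_leq_card; apply/subsetP => X /imsetP [F]; rewrite !inE => /andP [/andP [sF /eqP cF] pF] ->.
by case: (H1 F sF pF) => -> -> ->; rewrite cF eqxx.
Qed.

Lemma inj_lt E E' (Psi : {set {set 'I_n}} -> {set {set 'I_n}}) (X : {set {set 'I_n}}) :
  (forall F, F \subset E -> P F -> [/\ Psi F \subset E', #|Psi F| = #|F| & P (Psi F)]) ->
  (forall F1 F2, F1 \subset E -> P F1 -> F2 \subset E -> P F2 -> Psi F1 = Psi F2 -> F1 = F2) ->
  X \subset E' -> P X -> (forall F, F \subset E -> P F -> Psi F != X) ->
  Ncount 3 E s t #|X| < Ncount 3 E' s t #|X|.
Proof.
move=> H1 H2 XE PX H3; rewrite !NcountE.
have -> : #|Aset E #|X| | = #|Psi @: Aset E #|X| |.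
  apply/esym/card_in_imset => F1 F2; rewrite !inE => /andP [/andP [s1 _] p1] /andP [/andP [s2 _] p2].
  exact: H2.
apply: proper_card; apply/properP; split.
  apply/subsetP => Y /imsetP [F]; rewrite !inE => /andP [/andP [sF /eqP cF] pF] ->.
  by case: (H1 F sF pF) => -> -> ->; rewrite cF eqxx.
exists X; first by rewrite !inE XE eqxx PX.
apply/imsetP => [[F]]; rewrite !inE => /andP [/andP [sF _] pF] XF.
by move: (H3 F sF pF); rewrite XF eqxx.
Qed.

Lemma bij_le E (phi : {set 'I_n} -> {set 'I_n}) : injective phi ->
  (forall F, F \subset E -> P F -> P (phi @: F)) ->
  forall i, Ncount 3 E s t i <= Ncount 3 (phi @: E) s t i.
Proof.
move=> inj H; apply: (inj_le (Psi := fun F => phi @: F)).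
  by move=> F sF pF; split; [exact: imsetS | exact: card_imset | exact: H].
by move=> F1 F2 _ _ _ _; apply: imset_inj.
Qed.

Lemma bij_lt E (phi : {set 'I_n} -> {set 'I_n}) F : injective phi ->
  (forall F, F \subset E -> P F -> P (phi @: F)) ->
  F \subset E -> ~ P F -> P (phi @: F) ->
  Ncount 3 E s t #|F| < Ncount 3 (phi @: E) s t #|F|.
Proof.
move=> inj H sF nPF PF'.
rewrite -(card_imset F inj).
apply: (inj_lt (Psi := fun F => phi @: F)).
- by move=> G sG pG; split; [exact: imsetS | exact: card_imset | exact: H].
- by move=> F1 F2 _ _ _ _; apply: imset_inj.
- exact: imsetS.
- exact: PF'.
- move=> G sG pG; apply/eqP => /imset_inj => /(_ inj) GF.
  by apply: nPF; rewrite -GF.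
Qed.

Definition sw (a b g : {set 'I_n}) : {set 'I_n} := if g == a then b else if g == b then a else g.

Lemma swK (a b : {set 'I_n}) : involutive (sw a b).
Proof.
move=> g; rewrite /sw; case: (eqVneq g a) => [->|ga]; first by rewrite eqxx; case: eqVneq.
case: (eqVneq g b) => [->|gb]; first by rewrite eqxx.
by rewrite (negbTE ga) (negbTE gb).
Qed.

Lemma sw_inj (a b : {set 'I_n}) : injective (sw a b).
Proof. exact: inv_inj (swK a b). Qed.

Lemma sw_fix (a b g : {set 'I_n}) : g != a -> g != b -> sw a b g = g.
Proof. by rewrite /sw => /negbTE -> /negbTE ->. Qed.

Lemma sw_a (a b : {set 'I_n}) : sw a b a = b.
Proof. by rewrite /sw eqxx. Qed.

Lemma sw_b (a b : {set 'I_n}) : sw a b b = a.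
Proof. by rewrite /sw; case: eqVneq => [->|]; rewrite ?eqxx. Qed.

Definition better E E' :=
  [/\ simple_edges E', #|E'| = #|E|, (forall i, Ncount 3 E s t i <= Ncount 3 E' s t i) &
      exists j, [/\ 0 < j, j <= #|E| & Ncount 3 E s t j < Ncount 3 E' s t j]].

Lemma NP0 : ~ P set0.
Proof. by apply: NS => g; rewrite inE. Qed.

Lemma swap_better E e d F : e \in E -> d \notin E -> #|d| = 2 -> simple_edges E ->
  (forall F, F \subset E -> P F -> P (sw e d @: F)) ->
  F \subset E -> ~ P F -> P (sw e d @: F) -> better E (sw e d @: E).
Proof.
move=> eE dE cd sE H FE nPF PF'; split.
- apply/forallP => g; apply/implyP => /imsetP [h hE ->].
  rewrite /sw; case: ifP => _; first by rewrite cd.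
  case: ifP => [/eqP hd|_]; first by move: dE; rewrite -hd hE.
  by move/forallP: sE => /(_ h) /implyP /(_ hE).
- exact: card_imset (@sw_inj e d).
- exact: bij_le (@sw_inj e d) H.
- exists #|F|; split.
  + rewrite card_gt0; apply: contraTneq PF' => ->; rewrite imset0; exact/negP/NP0.
  + exact: subset_leq_card.
  + exact: bij_lt (@sw_inj e d) H FE nPF PF'.
Qed.

Lemma sub_fix (phi : {set 'I_n} -> {set 'I_n}) Q F :
  Q \subset F -> (forall g, g \in Q -> phi g = g) -> Q \subset phi @: F.
Proof.
move=> /subsetP QF H; apply/subsetP => g gQ; rewrite -(H g gQ).
by apply: imset_f; apply: QF.
Qed.

Lemma Pst : P [set [set s; t]].
Proof. by apply/P_shape; exists [set [set s; t]]; split => //; left. Qed.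

Lemma P2 a : a != s -> a != t -> P [set [set s; a]; [set a; t]].
Proof. by move=> sa ta; apply/P_shape; eexists; split; last exact: subxx; right; left; exists a. Qed.

Lemma P3 a b : a != s -> a != t -> b != s -> b != t -> a != b ->
  P [set [set s; a]; [set a; b]; [set b; t]].
Proof.
move=> sa ta sb tb ab; apply/P_shape; eexists; split; last exact: subxx.
by right; right; exists a, b; rewrite sa ta sb tb ab.
Qed.

Lemma P1 g : P [set g] -> g = [set s; t].
Proof.
case/P_shape => Q [sQ].
case: sQ => [->|[[a [sa ta ->]]|[a [b [/and5P [sa ta sb tb ab] ->]]]]];
 rewrite ?subUset !sub1set !inE => QF; crush.
by []. Qed.

Lemma card_e2 x y : x != y -> #|[set x; y]| = 2.
Proof. by move=> xy; rewrite cards2 xy. Qed.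

Lemma M1 E e : simple_edges E -> e \in E -> [set s; t] \notin E -> exists E', better E E'.
Proof.
move=> sE eE stE; exists (sw e [set s; t] @: E).
apply: (swap_better (F := [set e])) => //.
- exact: card_e2.
- move=> F FE PF; case: (boolP (e \in F)) => eF.
    apply: (@P_mono _ _ _ Pst); rewrite sub1set; apply/imsetP; exists e => //; by rewrite sw_a.
  apply: (@P_mono _ _ _ PF); apply: sub_fix => // g gF; apply: sw_fix.
    by apply: contraNneq eF => <-.
  by apply: contraNneq stE => <-; apply: (subsetP FE).
- by rewrite sub1set.
- by move/P1 => est; move: stE; rewrite -est eE.
- by rewrite imset_set1 sw_a; exact: Pst.
Qed.

Lemma M2 E a b : simple_edges E -> a != s -> a != t -> b != s -> b != t -> a != b ->
  [set s; a] \in E -> [set a; t] \notin E -> [set b; t] \in E -> [set a; b] \in E ->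
  exists E', better E E'.
Proof.
move=> sE sa ta sb tb ab saE atE btE abE; exists (sw [set a; b] [set a; t] @: E).
apply: (swap_better (F := [set [set s; a]; [set a; b]])) => //.
- by apply: card_e2.
- move=> F FE /P_shape [Q [sQ QF]].
  case: (boolP ([set a; b] \in Q)) => abQ.
    case: (shape_int sQ abQ sa ta sb tb) => [[saQ btQ]|[_ atQ]].
      apply: (@P_mono _ _ _ (P2 sa ta)); apply/subsetP => g; rewrite !inE => /orP [] /eqP ->.
        rewrite -(@sw_fix [set a; b] [set a; t] [set s; a]); first by apply: imset_f; apply: (subsetP QF).
          by apply/negP => H; crush.
        by apply/negP => H; crush.
      by apply/imsetP; exists [set a; b]; rewrite ?sw_a //; apply: (subsetP QF).
    by move: atE; rewrite (subsetP (subset_trans QF FE) _ atQ).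
  apply/P_shape; exists Q; split => //; apply: sub_fix => // g gQ; apply: sw_fix.
    by apply: contraNneq abQ => <-.
  by apply: contraNneq atE => <-; apply: (subsetP (subset_trans QF FE)).
- by rewrite subUset !sub1set saE abE.
- by apply: NT => g; rewrite !inE => H; crush; notin.
- rewrite imsetU1 imset_set1 sw_a sw_fix; first exact: P2.
    by apply/negP => H; crush.
  by apply/negP => H; crush.
Qed.

Lemma M2' E a b : simple_edges E -> a != s -> a != t -> b != s -> b != t -> a != b ->
  [set a; t] \in E -> [set s; a] \notin E -> [set s; b] \in E -> [set a; b] \in E ->
  exists E', better E E'.
Proof.
move=> sE sa ta sb tb ab atE saE sbE abE; exists (sw [set a; b] [set s; a] @: E).
apply: (swap_better (F := [set [set a; b]; [set a; t]])) => //.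
- by apply: card_e2; rewrite eq_sym.
- move=> F FE /P_shape [Q [sQ QF]].
  case: (boolP ([set a; b] \in Q)) => abQ.
    case: (shape_int sQ abQ sa ta sb tb) => [[saQ _]|[sbQ atQ]].
      by move: saE; rewrite (subsetP (subset_trans QF FE) _ saQ).
    apply: (@P_mono _ _ _ (P2 sa ta)); apply/subsetP => g; rewrite !inE => /orP [] /eqP ->.
      by apply/imsetP; exists [set a; b]; rewrite ?sw_a //; apply: (subsetP QF).
    rewrite -(@sw_fix [set a; b] [set s; a] [set a; t]); first by apply: imset_f; apply: (subsetP QF).
      by apply/negP => H; crush.
    by apply/negP => H; crush.
  apply/P_shape; exists Q; split => //; apply: sub_fix => // g gQ; apply: sw_fix.
    by apply: contraNneq abQ => <-.
  by apply: contraNneq saE => <-; apply: (subsetP (subset_trans QF FE)).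
- by rewrite subUset !sub1set atE abE.
- by apply: NS => g; rewrite !inE => H; crush; notin.
- rewrite imsetU1 imset_set1 sw_a sw_fix.
  + exact: P2.
  + by apply/negP => H; crush.
  + by apply/negP => H; crush.
Qed.

Lemma M3 E e d Q' : simple_edges E -> useless E e -> e \in E -> d \notin E -> #|d| = 2 ->
  shape Q' -> d \in Q' -> Q' \subset d |: (E :\ e) -> exists E', better E E'.
Proof.
move=> sE ue eE dE cd sQ' dQ' Q'E; exists (sw e d @: E).
have FE : (Q' :\ d) :|: [set e] \subset E.
  rewrite subUset sub1set eE andbT; apply/subsetP => g; rewrite !inE => /andP [gd gQ].
  by move: (subsetP Q'E g gQ); rewrite !inE (negbTE gd) /= => /andP [].
apply: (swap_better (F := (Q' :\ d) :|: [set e])) => //.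
- move=> F FE' /P_shape [Q [sQ QF]]; apply/P_shape; exists Q; split => //.
  apply: sub_fix => // g gQ; apply: sw_fix.
    by apply: contraTneq gQ => ->; apply: ue => //; apply: subset_trans QF FE'.
  by apply: contraNneq dE => <-; apply: (subsetP (subset_trans QF FE')).
- move=> PF; move: (useless_rm ue FE PF) => PF'.
  apply: (shape_minus sQ' dQ'); apply: (@P_mono _ _ _ PF').
  by apply/subsetP => g; rewrite !inE => /andP [ge] /orP [//|/eqP gE]; move: ge; rewrite gE eqxx.
- apply/P_shape; exists Q'; split => //; apply/subsetP => g gQ.
  case: (eqVneq g d) => [->|gd].
    by apply/imsetP; exists e; rewrite ?sw_a // !inE eqxx orbT.
  have ge : g != e by move: (subsetP Q'E g gQ); rewrite !inE (negbTE gd) /= => /andP [].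
  by apply/imsetP; exists g; rewrite ?sw_fix // !inE gd gQ.
Qed.

Lemma imset_cancel (phi psi : {set 'I_n} -> {set 'I_n}) F :
  (forall g, psi (phi g) = g) -> psi @: (phi @: F) = F.
Proof. by move=> H; rewrite -imset_comp (eq_imset _ H) imset_id. Qed.

Lemma IMC (phi : {set 'I_n} -> {set 'I_n}) F (C D : {set {set 'I_n}}) :
  (forall g, g \in D -> phi g = g) -> (forall h, h \in F -> h \notin D -> phi h \notin C) ->
  D \subset C -> (phi @: F) :&: C = F :&: D.
Proof.
move=> H1 H2 DC; apply/setP => g; rewrite !inE; apply/andP/andP => [[/imsetP [h hF ->] hC]|[gF gD]].
  case: (boolP (h \in D)) => hD; first by rewrite (H1 h hD) hF hD.
  by move: (H2 h hF hD); rewrite hC.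
by rewrite (subsetP DC g gD); split => //; rewrite -(H1 g gD); apply: imset_f.
Qed.

Lemma M5 E e x y c : simple_edges E -> useless E e -> e \in E -> [set x; y] \in E ->
  [set x; y] != e -> x != y -> x != s -> x != t -> y != s -> y != t -> c != s -> c != t ->
  [set s; c] \notin E :\ [set x; y] :\ e -> [set c; t] \notin E :\ [set x; y] :\ e ->
  exists E', better E E'.
Proof.
move=> sE ue eE fE fe xy xs xt ys yt cs ct.
have fsc : [set x; y] != [set s; c] by apply/negP => H; crush.
have ftc : [set x; y] != [set c; t] by apply/negP => H; crush.
have sctc : [set s; c] != [set c; t] by apply/negP => H; crush.
have sxf : [set s; x] != [set x; y] by apply/negP => H; crush.
have syf : [set s; y] != [set x; y] by apply/negP => H; crush.
have xtf : [set x; t] != [set x; y] by apply/negP => H; crush.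
have ytf : [set y; t] != [set x; y] by apply/negP => H; crush.
have sxyt : [set s; x] != [set y; t] by apply/negP => H; crush.
have syxt : [set s; y] != [set x; t] by apply/negP => H; crush.
have syyt : [set s; y] != [set y; t] by apply/negP => H; crush.
have sxxt : [set s; x] != [set x; t] by apply/negP => H; crush.
have sxsy : [set s; x] != [set s; y] by apply/negP => H; crush.
have sytc : [set s; y] != [set c; t] by apply/negP => H; crush.
set f := [set x; y]; set C := E :\ f :\ e; set sc := [set s; c]; set tc := [set c; t].
move=> scC tcC.
have inC g : g \in C -> [/\ g != f, g != e, g \in E, g != sc & g != tc].
  move=> gC; move: (gC); rewrite !inE => /andP [ge /andP [gf gE]]; split => //.
    by apply: contraNneq scC => <-.
  by apply: contraNneq tcC => <-.
have memE h : h \in E -> [\/ h \in C, h = f | h = e].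
  move=> hE; case: (eqVneq h f) => [->|hf]; first by constructor 2.
  case: (eqVneq h e) => [->|he]; first by constructor 3.
  by constructor 1; rewrite !inE hf he hE.
pose phi1 g := sw f sc (sw e tc g).
pose phi3 (sg : {set 'I_n}) g := sw sg sc (sw f tc g).
pose phi1inv g := sw e tc (sw f sc g).
pose phi3inv (sg : {set 'I_n}) g := sw f tc (sw sg sc g).
have c1 g : phi1inv (phi1 g) = g by rewrite /phi1inv /phi1 !swK.
have c3 sg g : phi3inv sg (phi3 sg g) = g by rewrite /phi3inv /phi3 !swK.
have inj1 : injective phi1 by apply: inj_comp; apply: sw_inj.
have inj3 sg : injective (phi3 sg) by apply: inj_comp; apply: sw_inj.
have p1f : phi1 f = sc by rewrite /phi1 (@sw_fix e tc f) ?sw_a.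
have p1e : phi1 e = tc by rewrite /phi1 sw_a sw_fix // eq_sym.
have p1C g : g \in C -> phi1 g = g.
  by case/inC => gf ge _ gsc gtc; rewrite /phi1 !sw_fix.
have p3s sg : sg \in C -> phi3 sg sg = sc.
  by case/inC => gf _ _ _ gtc; rewrite /phi3 (@sw_fix f tc sg) ?sw_a.
have p3f sg : sg \in C -> phi3 sg f = tc.
  by case/inC => _ _ _ _ gtc; rewrite /phi3 sw_a sw_fix // eq_sym.
have p3C sg g : g \in C -> g != sg -> phi3 sg g = g.
  by case/inC => gf _ _ gsc gtc gs; rewrite /phi3 !sw_fix.
pose comp (X : {set {set 'I_n}}) := (([set s; x] \in X) && ([set y; t] \in X)) || (([set s; y] \in X) && ([set x; t] \in X)).
pose sig (X : {set {set 'I_n}}) := if ([set s; x] \in X) && ([set y; t] \in X) then [set s; x] else [set s; y].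
pose sig' (X : {set {set 'I_n}}) := if [set y; t] \in X then [set s; x] else [set s; y].
pose Psi (F : {set {set 'I_n}}) := if P (F :&: C) || (e \in F) then phi1 @: F else phi3 (sig (F :&: C)) @: F.
pose Phi (X : {set {set 'I_n}}) := if P (X :&: C) || comp (X :&: C) then phi1inv @: X else phi3inv (sig' (X :&: C)) @: X.
have hA F : F \subset E -> P F -> ~ P (F :&: C) -> f \in F.
  move=> FE PF nP; apply/negPn/negP => fF; apply: nP.
  apply: (@P_mono _ _ _ (useless_rm ue FE PF)).
  apply/subsetP => g; rewrite /C !inE => /andP [ge gF].
  rewrite gF ge (subsetP FE g gF) andbT /=.
  by apply: contraNneq fF => <-.
have hB F : F \subset E -> P F -> ~ P (F :&: C) -> comp (F :&: C).
  move=> FE PF nP; case/P_shape: (useless_rm ue FE PF) => Q [sQ QF].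
  have mem g : g \in Q -> g != f -> g \in F :&: C.
    move=> gQ gf; move: (subsetP QF g gQ); rewrite /C !inE => /andP [ge gF].
    by rewrite gF ge gf (subsetP FE g gF).
  case: (boolP (f \in Q)) => fQ; last first.
    exfalso; apply: nP; apply/P_shape; exists Q; split => //.
    apply/subsetP => g gQ; apply: mem => //.
    by apply: contraNneq fQ => <-.
  case: (shape_int sQ fQ xs xt ys yt) => [[h1 h2]|[h1 h2]]; rewrite /comp.
    by rewrite (mem _ h1 sxf) (mem _ h2 ytf).
  by rewrite (mem _ h1 syf) (mem _ h2 xtf) orbT.
have hC X : ~ P X -> comp X -> [/\ sig X \in X, ~~ comp (X :\ sig X) & sig' (X :\ sig X) = sig X].
  move=> nP.
  have n1 : ~~ (([set s; x] \in X) && ([set x; t] \in X)).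
    apply/negP => /andP [a b]; apply: nP; apply: (@P_mono _ _ _ (P2 xs xt)).
    by rewrite subUset !sub1set a b.
  have n2 : ~~ (([set s; y] \in X) && ([set y; t] \in X)).
    apply/negP => /andP [a b]; apply: nP; apply: (@P_mono _ _ _ (P2 ys yt)).
    by rewrite subUset !sub1set a b.
  rewrite /comp /sig /sig'.
  move: n1 n2.
  have q1 := negbTE sxyt; have q2 := negbTE syxt; have q3 := negbTE syyt; have q4 := negbTE sxxt;
  have q5 := negbTE sxsy.
  have q1' : ([set y; t] == [set s; x]) = false by rewrite eq_sym.
  have q2' : ([set x; t] == [set s; y]) = false by rewrite eq_sym.
  have q3' : ([set y; t] == [set s; y]) = false by rewrite eq_sym.
  have q4' : ([set x; t] == [set s; x]) = false by rewrite eq_sym.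
  have q5' : ([set s; y] == [set s; x]) = false by rewrite eq_sym.
  case: ifP => A; rewrite !inE ?eqxx ?q1 ?q2 ?q3 ?q4 ?q5 ?q1' ?q2' ?q3' ?q4' ?q5' /=.
    by move: A; case: ([set s; x] \in X); case: ([set y; t] \in X); case: ([set s; y] \in X);
      case: ([set x; t] \in X).
  by move: A; case: ([set s; x] \in X); case: ([set y; t] \in X); case: ([set s; y] \in X);
      case: ([set x; t] \in X).
pose H := sc |: (tc |: C).
have scH : sc \in H by rewrite !inE eqxx.
have tcH : tc \in H by rewrite !inE eqxx orbT.
have CH g : g \in C -> g \in H by move=> gC; rewrite /H !in_setU1 gC !orbT.
have psiP F : F \subset E -> P F ->
    [/\ Psi F \subset H, #|Psi F| = #|F|, P (Psi F) & Phi (Psi F) = F].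
  move=> FE PF; rewrite /Psi; case: ifP => b.
  - have I1 : (phi1 @: F) :&: C = F :&: C.
      apply: IMC => //; move=> h hF hCC; case: (memE h (subsetP FE h hF)) => [hC'|->|->].
      + by rewrite hC' in hCC.
      + by rewrite p1f.
      + by rewrite p1e.
    split.
    + apply/subsetP => g /imsetP [h hF ->]; case: (memE h (subsetP FE h hF)) => [hCC|->|->].
      * by rewrite p1C // CH.
      * by rewrite p1f.
      * by rewrite p1e.
    + exact: card_imset.
    + case/orP: b => [PF0|eF].
        by apply: (@P_mono _ _ _ PF0); rewrite -I1 subsetIl.
      case: (boolP (P (F :&: C))) => [PF0|nPF0].
        by apply: (@P_mono _ _ _ PF0); rewrite -I1 subsetIl.
      have fF := hA F FE PF (negP nPF0).
      apply: (@P_mono _ _ _ (P2 cs ct)); rewrite subUset !sub1set.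
      by apply/andP; split; apply/imsetP; [exists f | exists e]; rewrite ?p1f ?p1e.
    + rewrite /Phi I1; case: ifP => b'; first exact: imset_cancel.
      exfalso; case: (boolP (P (F :&: C))) => [PF0|nPF0]; first by rewrite PF0 in b'.
      by move: b'; rewrite (hB F FE PF (negP nPF0)) orbT.
  - move/negbT: b; rewrite negb_or => /andP [nPF0 eF].
    have fF := hA F FE PF (negP nPF0).
    have cF := hB F FE PF (negP nPF0).
    case: (hC _ (negP nPF0) cF) => sgF ncomp sg'.
    set sg := sig (F :&: C) in sgF ncomp sg' *.
    have sgC : sg \in C by move: sgF; rewrite inE => /andP [].
    have sgF' : sg \in F by move: sgF; rewrite inE => /andP [].
    have I3 : (phi3 sg @: F) :&: C = (F :&: C) :\ sg.
      rewrite -setIDA; apply: IMC; last exact: subsetDl.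
      * by move=> g; rewrite in_setD1 => /andP [gs gC]; apply: p3C.
      * move=> h hF; rewrite in_setD1 negb_and negbK => /orP [/eqP ->|hCC].
          by rewrite p3s // /C !inE eqxx.
        case: (memE h (subsetP FE h hF)) => [hC'|->|hE].
        - by rewrite hC' in hCC.
        - by rewrite p3f // /C !inE eqxx andbF.
        - by move: eF; rewrite -hE hF.
    split.
    + apply/subsetP => g /imsetP [h hF ->]; case: (memE h (subsetP FE h hF)) => [hCC|->|hE].
      * case: (eqVneq h sg) => [->|hs]; first by rewrite p3s.
        by rewrite p3C // CH.
      * by rewrite p3f.
      * by move: eF; rewrite -hE hF.
    + exact: card_imset.
    + apply: (@P_mono _ _ _ (P2 cs ct)); rewrite subUset !sub1set.
      by apply/andP; split; apply/imsetP; [exists sg | exists f]; rewrite ?p3s ?p3f.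
    + rewrite /Phi I3.
      have nP' : ~ P ((F :&: C) :\ sg).
        by move=> PP; apply: (negP nPF0); apply: (@P_mono _ _ _ PP); apply: subsetDl.
      case: ifP => b'.
        by exfalso; move: b'; rewrite (negbTE ncomp) orbF => /nP'.
      by rewrite sg'; apply: imset_cancel.
have cardE : #|E| = (#|C|).+2.
  rewrite (cardsD1 f E) fE (cardsD1 e (E :\ f)) in_setD1 eq_sym fe eE.
  by rewrite add1n add1n.
have injP F1 F2 : F1 \subset E -> P F1 -> F2 \subset E -> P F2 -> Psi F1 = Psi F2 -> F1 = F2.
  move=> s1 p1 s2 p2 e12.
  case: (psiP F1 s1 p1) => _ _ _ <-; case: (psiP F2 s2 p2) => _ _ _ <-.
  by rewrite e12.
have ctt : c != t := ct.
exists H; split.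
- apply/forallP => g; apply/implyP; rewrite /H !in_setU1 => /orP [/eqP ->|/orP [/eqP ->|gC]].
  + by rewrite /sc cards2 [s == c]eq_sym cs.
  + by rewrite /tc cards2 ct.
  + by case: (inC g gC) => _ _ gE _ _; move/forallP: sE => /(_ g) /implyP /(_ gE).
- rewrite /H !cardsU1 in_setU1 (negbTE sctc) /= cardE.
  by rewrite (negbTE scC) (negbTE tcC).
- apply: (inj_le (Psi := Psi)) => // F FE PF.
  by case: (psiP F FE PF).
- exists 2; split => //; first by rewrite cardE.
  have c2 : #|[set sc; tc]| = 2 by rewrite cards2 sctc.
  have L := @inj_lt E H Psi [set sc; tc]; rewrite c2 in L; apply: L => //.
  + by move=> F FE PF; case: (psiP F FE PF).
  + by rewrite subUset !sub1set scH tcH.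
  + exact: P2.
  + move=> F FE PF; apply/eqP => PX.
    case: (psiP F FE PF) => _ _ _; rewrite PX => HF.
    have X0 : [set sc; tc] :&: C = set0.
      apply/setP => g; rewrite in_setI in_set2 in_set0.
      by apply/andP => [[/orP [/eqP ->|/eqP ->] gC]]; [move: scC | move: tcC]; rewrite gC.
    move: HF; rewrite /Phi X0.
    have -> : P set0 || comp set0 = false.
      by apply/negbTE; rewrite negb_or /comp !in_set0 /= andbT; apply/negP => /NP0.
    rewrite /sig' in_set0 => HF.
    apply: (@NT F _ PF) => g; rewrite -HF => /imsetP [h]; rewrite in_set2 => /orP [/eqP ->|/eqP ->] ->.
    * rewrite /phi3inv sw_b sw_fix //.
      by notin.
    * rewrite /phi3inv (@sw_fix [set s; y] sc tc) ?sw_b; first by notin.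
        by rewrite eq_sym.
      by rewrite eq_sym.
Qed.

Lemma useless_sa E a : a != s -> a != t -> [set a; t] \notin E ->
  (forall b, b != s -> b != t -> a != b -> [set b; t] \in E -> [set a; b] \notin E) ->
  useless E [set s; a].
Proof.
move=> sa ta atE Hb Q sQ; apply: contraTN => saQ.
case: sQ saQ => [->|[[a' [sa' ta' ->]]|[a' [b' [/and5P [sa' ta' sb' tb' ab'] ->]]]]];
 rewrite !inE => H; rewrite ?subUset !sub1set; apply/negP => QE; crush.
- by move: atE; rewrite ?QE ?QE0 ?QE1.
- by move: (Hb b' sb' tb' ab' QE0) => /negP; apply.
Qed.

Lemma useless_at E a : a != s -> a != t -> [set s; a] \notin E ->
  (forall b, b != s -> b != t -> a != b -> [set s; b] \in E -> [set b; a] \notin E) ->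
  useless E [set a; t].
Proof.
move=> sa ta saE Hb Q sQ; apply: contraTN => atQ.
case: sQ atQ => [->|[[a' [sa' ta' ->]]|[a' [b' [/and5P [sa' ta' sb' tb' ab'] ->]]]]];
 rewrite !inE => H; rewrite ?subUset !sub1set; apply/negP => QE; crush.
- by move: saE; rewrite ?QE ?QE0 ?QE1.
- by apply: (negP (Hb a' sa' ta' _ _)) => //; rewrite eq_sym.
Qed.

Lemma edge2 E g : simple_edges E -> g \in E -> exists u v, u != v /\ g = [set u; v].
Proof. by move=> /forallP /(_ g) /implyP H /H /cards2P. Qed.

Lemma shape2 a : a != s -> a != t -> shape [set [set s; a]; [set a; t]].
Proof. by move=> sa ta; right; left; exists a. Qed.

Lemma shape3 a b : a != s -> a != t -> b != s -> b != t -> a != b ->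
  shape [set [set s; a]; [set a; b]; [set b; t]].
Proof. by move=> sa ta sb tb ab; right; right; exists a, b; rewrite sa ta sb tb ab. Qed.

Definition noI E e := forall a, a != s -> a != t -> [set s; a] \in E -> [set a; t] \notin E ->
  [set s; a] = e.
Definition noI' E e := forall a, a != s -> a != t -> [set a; t] \in E -> [set s; a] \notin E ->
  [set a; t] = e.

Lemma find_c E e : simple_edges E -> [set s; t] \in E -> e \in E -> useless E e ->
  noI E e -> noI' E e ->
  exists c, [/\ c != s, c != t, ([set s; c] \notin E) || ([set s; c] == e) &
                ([set c; t] \notin E) || ([set c; t] == e)].
Proof.
move=> sE stE eE ue n1 n2.
have est : e != [set s; t].
  apply/eqP => E1; move: (ue [set [set s; t]] (or_introl erefl)).
  by rewrite sub1set stE E1 inE eqxx => /(_ isT).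
case: (edge2 sE eE) => u [v [uv ee]].
have gen w : w != s -> e = [set s; w] -> exists c, [/\ c != s, c != t, ([set s; c] \notin E) || ([set s; c] == e) &
                ([set c; t] \notin E) || ([set c; t] == e)].
  move=> ws ew; have wt : w != t by apply: contraNneq est => wt; rewrite ew wt.
  exists w; split => //; first by rewrite ew eqxx orbT.
  apply/orP; left; apply/negP => wtE.
  move: (ue _ (shape2 ws wt)); rewrite subUset !sub1set -ew eE wtE => /(_ isT).
  by rewrite !inE eqxx.
have gen' w : w != t -> e = [set w; t] -> exists c, [/\ c != s, c != t, ([set s; c] \notin E) || ([set s; c] == e) &
                ([set c; t] \notin E) || ([set c; t] == e)].
  move=> wt ew; have ws : w != s by apply: contraNneq est => ws; rewrite ew ws.
  exists w; split => //; last by rewrite ew eqxx orbT.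
  apply/orP; left; apply/negP => swE.
  move: (ue _ (shape2 ws wt)); rewrite subUset !sub1set -ew eE swE => /(_ isT).
  by rewrite !inE eqxx orbT.
case: (eqVneq u s) => [us|us]; first by apply: (gen v); rewrite -?us // eq_sym.
case: (eqVneq v s) => [vs|vs]; first by apply: (gen u) => //; rewrite ee vs setUC.
case: (eqVneq v t) => [vt|vt]; first by apply: (gen' u); rewrite -?vt // .
case: (eqVneq u t) => [ut|ut]; first by apply: (gen' v) => //; rewrite ee ut setUC.
have both w : w != s -> w != t -> w \in [set u; v] ->
    (([set s; w] \notin E) && ([set w; t] \notin E)) || (([set s; w] \in E) && ([set w; t] \in E)).
  move=> ws wt wuv.
  case: (boolP ([set s; w] \in E)) => swE; case: (boolP ([set w; t] \in E)) => wtE //=.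
    have := n1 w ws wt swE wtE; rewrite ee => H.
    by move: (set21 s w); rewrite H !inE => /orP [] /eqP ?; subst; econtra.
  have := n2 w ws wt wtE swE; rewrite ee => H.
  by move: (set22 w t); rewrite H !inE => /orP [] /eqP ?; subst; econtra.
case/orP: (both u us ut (set21 _ _)) => [/andP [h1 h2]|/andP [h1 h2]].
  by exists u; rewrite us ut h1 h2.
case/orP: (both v vs vt (set22 _ _)) => [/andP [h3 h4]|/andP [h3 h4]].
  by exists v; rewrite vs vt h3 h4.
exfalso; move: (ue _ (shape3 us ut vs vt uv)).
by rewrite !subUset !sub1set h1 -ee eE h4 !inE eqxx orbT => /(_ isT).
Qed.

Definition noII E := forall x y, x != y -> x != s -> x != t -> y != s -> y != t ->
  [set s; x] \in E -> [set x; t] \in E -> [set s; y] \in E -> [set y; t] \in E -> [set x; y] \in E.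

Lemma find_f E e : simple_edges E -> 5 <= #|E| -> [set s; t] \in E -> e \in E -> useless E e ->
  noI E e -> noI' E e -> noII E ->
  exists x y, [&& x != y, x != s, x != t, y != s & y != t] /\ [set x; y] \in E /\ [set x; y] != e.
Proof.
move=> sE cE stE eE ue n1 n2 n3.
apply: NNPP => nf.
have nf' x y : [&& x != y, x != s, x != t, y != s & y != t] -> [set x; y] \in E -> [set x; y] = e.
  move=> H1 H2; apply/eqP; apply: negbNE; apply/negP => H3; apply: nf; exists x, y; split => //.
pose N := [set w | [&& w != s, w != t, [set s; w] \in E & [set w; t] \in E]].
have N1 : #|N| <= 1.
  rewrite leqNgt; apply/negP => /card_gt1P [x [y [xN yN xy]]].
  move: xN yN; rewrite !inE => /and4P [xs xt sxE xtE] /and4P [ys yt syE ytE].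
  have xyE := n3 x y xy xs xt ys yt sxE xtE syE ytE.
  have := nf' x y; rewrite xy xs xt ys yt => /(_ isT xyE) exy.
  move: (ue _ (shape3 xs xt ys yt xy)); rewrite !subUset !sub1set sxE xyE ytE => /(_ isT).
  by rewrite -exy !inE eqxx orbT.
pose U := [set [set s; t]; e] :|: ([set [set s; w] | w in N] :|: [set [set w; t] | w in N]).
have EU : E \subset U.
  apply/subsetP => g gE; case: (edge2 sE gE) => u [v [uv eg]].
  have gs w : w != s -> g = [set s; w] -> g \in U.
    move=> ws gw; case: (eqVneq w t) => [wt|wt]; first by rewrite /U gw wt !inE eqxx.
    case: (boolP ([set w; t] \in E)) => wtE.
      apply/setUP; right; apply/setUP; left; apply/imsetP; exists w => //.
      by rewrite inE ws wt -gw gE wtE.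
    by rewrite /U -(n1 w ws wt _ wtE) -?gw // !inE eqxx orbT.
  have gt w : w != t -> g = [set w; t] -> g \in U.
    move=> wt gw; case: (eqVneq w s) => [ws|ws]; first by rewrite /U gw ws !inE eqxx.
    case: (boolP ([set s; w] \in E)) => swE.
      apply/setUP; right; apply/setUP; right; apply/imsetP; exists w => //.
      by rewrite inE ws wt -gw gE swE.
    by rewrite /U -(n2 w ws wt _ swE) -?gw // !inE eqxx orbT.
  case: (eqVneq u s) => [us|us]; first by apply: (gs v); rewrite -?us // eq_sym.
  case: (eqVneq v s) => [vs|vs]; first by apply: (gs u) => //; rewrite eg vs setUC.
  case: (eqVneq v t) => [vt|vt]; first by apply: (gt u); rewrite -?vt.
  case: (eqVneq u t) => [ut|ut]; first by apply: (gt v) => //; rewrite eg ut setUC.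
  have := nf' u v; rewrite uv us ut vs vt -eg => /(_ isT gE) ->.
  by rewrite !inE eqxx orbT.
have := subset_leq_card EU.
have c1 : #|[set [set s; t]; e]| <= 2 by rewrite cards2; case: (_ != _).
have c2 : #|[set [set s; w] | w in N]| <= 1 := leq_trans (leq_imset_card _ _) N1.
have c3 : #|[set [set w; t] | w in N]| <= 1 := leq_trans (leq_imset_card _ _) N1.
have := (leq_card_setU [set [set s; t]; e] ([set [set s; w] | w in N] :|: [set [set w; t] | w in N])).1.
have := (leq_card_setU [set [set s; w] | w in N] [set [set w; t] | w in N]).1.
rewrite -/U => h1 h2 h3.
have : #|E| <= 4.
  apply: (leq_trans h3); apply: (leq_trans h2).
  apply: (@leq_add _ _ 2 2) => //; apply: (leq_trans h1); exact: (@leq_add _ _ 1 1).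
by rewrite leqNgt (leq_trans _ cE).
Qed.

Lemma key E : simple_edges E -> 5 <= #|E| -> ~ in_Tstar E s t -> exists E', better E E'.
Proof.
move=> sE cE nT.
case: (boolP ([set s; t] \in E)) => stE; last first.
  have : E != set0 by rewrite -card_gt0 (leq_trans _ cE).
  by case/set0Pn => e eE; apply: (M1 sE eE stE).
case: (classic (exists a b, [/\ a != s, a != t, b != s, b != t & a != b] /\
   [/\ [set s; a] \in E, [set a; t] \notin E, [set b; t] \in E & [set a; b] \in E]))
   => [[a [b [[h1 h2 h3 h4 h5] [h6 h7 h8 h9]]]]|noM2].
  exact: (M2 sE h1 h2 h3 h4 h5 h6 h7 h8 h9).
case: (classic (exists a b, [/\ a != s, a != t, b != s, b != t & a != b] /\
   [/\ [set a; t] \in E, [set s; a] \notin E, [set s; b] \in E & [set a; b] \in E]))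
   => [[a [b [[h1 h2 h3 h4 h5] [h6 h7 h8 h9]]]]|noM2'].
  exact: (M2' sE h1 h2 h3 h4 h5 h6 h7 h8 h9).
have [e [eE ue]] : exists e, e \in E /\ useless E e.
  case: (classic (exists e, irrelevant 3 E s t e)) => [[e ie]|nirr].
    by exists e; split; [case: ie | apply: irr_useless].
  have ntw : ~ true_twins E s t.
    by move=> tw; apply: nT; split => // e ie; apply: nirr; exists e.
  have [v hv] : exists v, (v \in closed_nbhd E s) != (v \in closed_nbhd E t).
    apply: NNPP => H; apply: ntw; apply/setP => v; apply/eqP; apply: negbNE; apply/negP => H'.
    by apply: H; exists v.
  move: hv; rewrite /closed_nbhd !inE.
  case: (eqVneq v s) => [->|vs]; first by rewrite /= stE orbT.
  case: (eqVneq v t) => [->|vt]; first by rewrite /= [[set t; s]]setUC stE ?orbT.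
  rewrite /= [[set v; s]]setUC.
  case: (boolP ([set s; v] \in E)) => svE; case: (boolP ([set v; t] \in E)) => vtE //= _.
    exists [set s; v]; split => //; apply: useless_sa => // b bs bt vb btE.
    apply/negP => vbE; apply: noM2; exists v, b; split; split => //.
  exists [set v; t]; split => //; apply: useless_at => // b bs bt vb sbE.
  apply/negP => bvE; apply: noM2'; exists v, b; split; split => //.
  by rewrite setUC.
case: (classic (exists a, [/\ a != s, a != t, [set s; a] \in E, [set a; t] \notin E & [set s; a] != e]))
  => [[a [h1 h2 h3 h4 h5]]|nI].
  apply: (M3 sE ue eE h4 _ (shape2 h1 h2)).
  - exact: card_e2.
  - by rewrite !inE eqxx orbT.
  - by rewrite subUset !sub1set !inE eqxx h3 h5 ?orbT.
case: (classic (exists a, [/\ a != s, a != t, [set a; t] \in E, [set s; a] \notin E & [set a; t] != e]))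
  => [[a [h1 h2 h3 h4 h5]]|nI'].
  apply: (M3 sE ue eE h4 _ (shape2 h1 h2)).
  - by apply: card_e2; rewrite eq_sym.
  - by rewrite !inE eqxx.
  - by rewrite subUset !sub1set !inE eqxx h3 h5 ?orbT.
case: (classic (exists x y, [/\ x != y, x != s, x != t, y != s & y != t] /\
   [/\ [set s; x] \in E, [set x; t] \in E, [set s; y] \in E, [set y; t] \in E & [set x; y] \notin E]))
   => [[x [y [[h1 h2 h3 h4 h5] [h6 h7 h8 h9 h10]]]]|nII].
  apply: (M3 sE ue eE h10 _ (shape3 h2 h3 h4 h5 h1)).
  - exact: card_e2.
  - by rewrite !inE eqxx orbT.
  have sxe : [set s; x] != e.
    apply/eqP => E1; move: (ue _ (shape2 h2 h3)).
    by rewrite subUset !sub1set h6 h7 -E1 !inE eqxx => /(_ isT).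
  have yte : [set y; t] != e.
    apply/eqP => E1; move: (ue _ (shape2 h4 h5)).
    by rewrite subUset !sub1set h8 h9 -E1 !inE eqxx ?orbT => /(_ isT).
  by rewrite !subUset !sub1set !inE eqxx h6 h9 sxe yte ?orbT.
have noi : noI E e.
  move=> a h1 h2 h3 h4; apply/eqP; apply: negbNE; apply/negP => h5.
  by apply: nI; exists a; split.
have noi' : noI' E e.
  move=> a h1 h2 h3 h4; apply/eqP; apply: negbNE; apply/negP => h5.
  by apply: nI'; exists a; split.
have noii : noII E.
  move=> x y h1 h2 h3 h4 h5 h6 h7 h8 h9; apply: negbNE; apply/negP => h10.
  by apply: nII; exists x, y; split; split.
have [c [cs ct hsc htc]] := find_c sE stE eE ue noi noi'.
have [x [y [/and5P [xy xs xt ys yt] [fE fe]]]] := find_f sE cE stE eE ue noi noi' noii.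
apply: (M5 sE ue eE fE fe xy xs xt ys yt cs ct).
- rewrite !inE negb_and negbK; case/orP: hsc => [h|/eqP ->]; last by rewrite eqxx.
  by rewrite (negbTE h) !andbF orbT.
- rewrite !inE negb_and negbK; case/orP: htc => [h|/eqP ->]; last by rewrite eqxx.
  by rewrite (negbTE h) !andbF orbT.
Qed.

Definition tot m E := \sum_(i < m.+1) Ncount 3 E s t i.
Definition UB m := m.+1 * #|{: {set {set 'I_n}}}|.

Lemma tot_ub m E : tot m E <= UB m.
Proof.
rewrite /tot /UB; apply: (@leq_trans (\sum_(i < m.+1) #|{: {set {set 'I_n}}}|)).
  by apply: leq_sum => i _; rewrite NcountE; apply: max_card.
by rewrite sum_nat_const card_ord.
Qed.

Lemma tot_lt m E E' j : (forall i, Ncount 3 E s t i <= Ncount 3 E' s t i) ->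
  j <= m -> Ncount 3 E s t j < Ncount 3 E' s t j -> tot m E < tot m E'.
Proof.
move=> le jm lt; rewrite /tot.
have jm' : j < m.+1 by [].
rewrite [X in X < _](bigD1 (Ordinal jm')) // [X in _ < X](bigD1 (Ordinal jm')) //=.
rewrite -addSn; apply: leq_add => //.
by apply: leq_sum => i _; apply: le.
Qed.

Lemma main m E : simple_edges E -> #|E| = m -> 5 <= m ->
  exists E', [/\ simple_edges E', #|E'| = m, in_Tstar E' s t,
    (forall i, Ncount 3 E s t i <= Ncount 3 E' s t i) &
    (~ in_Tstar E s t -> exists j, [/\ 0 < j, j <= m & Ncount 3 E s t j < Ncount 3 E' s t j])].
Proof.
move=> sE cE hm.
suff H : forall k E, simple_edges E -> #|E| = m -> UB m - tot m E <= k ->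
  exists E', [/\ simple_edges E', #|E'| = m, in_Tstar E' s t,
    (forall i, Ncount 3 E s t i <= Ncount 3 E' s t i) &
    (~ in_Tstar E s t -> exists j, [/\ 0 < j, j <= m & Ncount 3 E s t j < Ncount 3 E' s t j])].
  exact: (H _ E sE cE (leqnn _)).
elim=> [|k IH] {sE cE} E sE cE hk; case: (classic (in_Tstar E s t)) => T.
- by exists E; split.
- have [E' [sE' cE' le [j [j0 jm lt]]]] := key sE (leq_trans hm (eq_leq (esym cE))) T.
  exfalso.
  have := tot_lt le (leq_trans jm (eq_leq cE)) lt.
  have := tot_ub m E'.
  move: hk; rewrite leqn0 subn_eq0 => h1 h2 h3.
  by have := leq_trans h3 (leq_trans h2 h1); rewrite ltnn.
- by exists E; split.
- have [E' [sE' cE' le [j [j0 jm lt]]]] := key sE (leq_trans hm (eq_leq (esym cE))) T.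
  rewrite cE in cE' jm.
  have h1 := tot_lt le jm lt.
  have h2 := tot_ub m E'.
  have hk' : UB m - tot m E' <= k.
    by move: hk h1 h2; set A := UB m; set B := tot m E; set C := tot m E'; lia.
  case: (IH E' sE' cE' hk') => E2 [sE2 cE2 T2 le2 _].
  exists E2; split => //.
    by move=> i; apply: leq_trans (le i) (le2 i).
  move=> _; exists j; split => //.
  exact: leq_trans lt (le2 j).
Qed.

End S.

Theorem lemma10 (n m : nat) : 5 <= n -> 5 <= m ->
  forall (E : {set {set 'I_n}}) (s t : 'I_n),
    two_terminal E s t -> #|E| = m -> ~ in_Tstar E s t ->
    exists (E' : {set {set 'I_n}}) (s' t' : 'I_n),
      [/\ two_terminal E' s' t', #|E'| = m, in_Tstar E' s' t' &
          stronger 3 m E' s' t' E s t].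
Proof.
move=> _ hm E s t /andP [sE st] cE nT.
have [E' [sE' cE' T' le lt]] := main st sE cE hm.
exists E', s, t; split => //.
  by rewrite /two_terminal sE' st.
split.
  by move=> i _; apply: le.
have [j [j0 jm ljt]] := lt nT.
by exists j; split => //; rewrite j0 jm.
Qed.
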